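(* Let $G=(V,E)$ be an unweighted connected graph with $n$ vertices, and let $s,t\in V$ be distinct. Then $$ \frac{2}{n^{2}}\leq B_{st}^{2}. $$
   Context: $L=D-A$ is the Laplacian of the unweighted graph $G$, $L^{+}$ its Moore–Penrose pseudoinverse, $L^{2+}=(L^+)^2$, and $1_v$ the indicator vector of vertex $v$. The biharmonic distance is $B_{st}=\sqrt{(1_s-1_t)^{T}L^{2+}(1_s-1_t)}$. *)

(* Defs.v *)
From mathcomp Require Import all_boot all_order all_algebra.
Set Implicit Arguments.
Unset Strict Implicit.
Unset Printing Implicit Defensive.
Import Order.TTheory GRing.Theory Num.Theory.
Local Open Scope ring_scope.

Definition simple_graph (n : nat) (e : rel 'I_n) : Prop :=
  symmetric e /\ irreflexive e.

Definition connected_graph (n : nat) (e : rel 'I_n) : Prop :=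
  forall x y : 'I_n, connect e x y.

Definition deg (n : nat) (e : rel 'I_n) (i : 'I_n) : nat := #|[set j | e i j]|.

Definition laplacian (R : nzRingType) (n : nat) (e : rel 'I_n) : 'M[R]_n :=
  \matrix_(i, j) ((if i == j then (deg e i)%:R else 0) - (if e i j then 1 else 0)).

(* X is the Moore--Penrose pseudoinverse of A (the four Penrose equations;
   the pseudoinverse is the unique matrix satisfying them). *)
Definition is_MP_pinv (R : nzRingType) (n : nat) (A X : 'M[R]_n) : Prop :=
  [/\ A *m X *m A = A, X *m A *m X = X,
      (A *m X)^T = A *m X & (X *m A)^T = X *m A].

Definition ind (R : nzRingType) (n : nat) (v : 'I_n) : 'cV[R]_n := delta_mx v 0.

Definition biharmonic_sq (R : nzRingType) (n : nat) (Lp : 'M[R]_n) (s t : 'I_n) : R :=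
  (((ind R s - ind R t)^T *m (Lp *m Lp) *m (ind R s - ind R t)) 0 0).

(* Main.v *)
Require Import Defs.
From mathcomp Require Import all_boot all_order all_algebra.
From mathcomp Require Import ring lra.
Import Order.TTheory GRing.Theory Num.Theory.
Local Open Scope ring_scope.
Set Implicit Arguments. Unset Strict Implicit.

Definition dotv (R : realFieldType) n (u v : 'cV[R]_n) : R := \sum_i u i 0 * v i 0.

Lemma dotvE (R : realFieldType) n (u v : 'cV[R]_n) : (u^T *m v) 0 0 = dotv u v.
Proof. by rewrite mxE; apply: eq_bigr => i _; rewrite mxE. Qed.

Lemma degE (R : realFieldType) n (e : rel 'I_n) i :
  (deg e i)%:R = \sum_j (e i j)%:R :> R.
Proof.
rewrite /deg -sum1_card natr_sum big_mkcond /=.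
by apply: eq_bigr => j _; rewrite inE; case: (e i j).
Qed.

Lemma lapE (R : realFieldType) n (e : rel 'I_n) (v : 'cV[R]_n) i :
  (laplacian R e *m v) i 0 = \sum_j (e i j)%:R * (v i 0 - v j 0).
Proof.
rewrite mxE.
under eq_bigr do rewrite mxE mulrBl.
rewrite sumrB (bigD1 i) //= eqxx big1; last first.
  by move=> j /negPf; rewrite eq_sym => ->; rewrite mul0r.
rewrite addr0 degE mulr_suml.
under [X in _ = X]eq_bigr do rewrite mulrBr.
rewrite sumrB; congr (_ - _); apply: eq_bigr => j _; case: (e i j); rewrite /= ?mul1r ?mul0r //.
Qed.

Lemma lap_tr (R : realFieldType) n (e : rel 'I_n) : symmetric e ->
  (laplacian R e)^T = laplacian R e.
Proof.
move=> sy; apply/matrixP => i j; rewrite !mxE sy eq_sym.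
by case: eqP => // ->.
Qed.

Lemma quad2 (R : realFieldType) n (e : rel 'I_n) (v : 'cV[R]_n) : symmetric e ->
  dotv v (laplacian R e *m v) *+ 2 =
  \sum_i \sum_j (e i j)%:R * (v i 0 - v j 0) ^+ 2.
Proof.
move=> sy.
have -> : dotv v (laplacian R e *m v) = \sum_i \sum_j (e i j)%:R * (v i 0 * (v i 0 - v j 0)).
  apply: eq_bigr => i _; rewrite lapE mulr_sumr; apply: eq_bigr => j _; ring.
rewrite mulr2n {1}exchange_big /= -big_split /=; apply: eq_bigr => i _.
rewrite -big_split /=; apply: eq_bigr => j _; rewrite sy; ring.
Qed.

Lemma quad_ge0 (R : realFieldType) n (e : rel 'I_n) (v : 'cV[R]_n) : symmetric e ->
  0 <= dotv v (laplacian R e *m v).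
Proof.
move=> sy; have := quad2 v sy.
have : 0 <= \sum_i \sum_j (e i j)%:R * (v i 0 - v j 0) ^+ 2 :> R.
  by apply: sumr_ge0 => i _; apply: sumr_ge0 => j _; apply: mulr_ge0; rewrite ?ler0n ?sqr_ge0.
move=> h1 h2; rewrite -h2 in h1; lra.
Qed.

Lemma quad_le (R : realFieldType) n (e : rel 'I_n) (v : 'cV[R]_n) : symmetric e ->
  dotv v (laplacian R e *m v) <= n%:R * dotv v v.
Proof.
move=> sy; have := quad2 v sy.
have h : \sum_i \sum_j (e i j)%:R * (v i 0 - v j 0) ^+ 2 <=
   \sum_i \sum_j (v i 0 - v j 0) ^+ 2 :> R.
  apply: ler_sum => i _; apply: ler_sum => j _; case: (e i j) => /=.
    by rewrite mul1r.
  by rewrite mul0r sqr_ge0.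
have h2 : \sum_i \sum_j (v i 0 - v j 0) ^+ 2 =
   (n%:R * dotv v v) *+ 2 - ((\sum_i v i 0) ^+ 2) *+ 2 :> R.
  have -> : \sum_i \sum_j (v i 0 - v j 0) ^+ 2 =
     \sum_i \sum_j (v i 0 ^+ 2 + v j 0 ^+ 2 - (v i 0 * v j 0) *+ 2) :> R.
    by apply: eq_bigr => i _; apply: eq_bigr => j _; ring.
  rewrite (eq_bigr (fun i => n%:R * v i 0 ^+ 2 + \sum_j v j 0 ^+ 2 - (v i 0 * \sum_j v j 0) *+ 2)); last first.
    move=> i _; rewrite !big_split /= sumrN sumr_const card_ord -mulr_natl mulr_sumr -sumrMnl.
    ring.
  rewrite !big_split /= sumrN sumr_const card_ord.
  rewrite sumrMnl -mulr_suml -mulr_sumr /dotv.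
  have -> : \sum_(j < n) v j 0 ^+ 2 = \sum_i v i 0 * v i 0 by apply: eq_bigr => i _; rewrite expr2.
  rewrite -mulr_natl.
  ring.
move=> h3; rewrite h2 in h; rewrite -h3 in h.
have : 0 <= (\sum_i v i 0) ^+ 2 :> R by apply: sqr_ge0.
lra.
Qed.

Lemma ker_const (R : realFieldType) n (e : rel 'I_n) (v : 'cV[R]_n) :
  symmetric e -> connected_graph e ->
  dotv v (laplacian R e *m v) = 0 -> forall i j, v i 0 = v j 0.
Proof.
move=> sy co h0.
have := quad2 v sy; rewrite h0 mul0rn => /esym H.
have edge : forall i j, e i j -> v i 0 = v j 0.
  move=> i j eij.
  have nn : forall i j, 0 <= (e i j)%:R * (v i 0 - v j 0) ^+ 2 :> R.
    by move=> a b; apply: mulr_ge0; rewrite ?ler0n ?sqr_ge0.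
  have Hi := psumr_eq0P (fun i _ => sumr_ge0 _ (fun j _ => nn i j)) H (i:=i) isT.
  have := psumr_eq0P (fun j _ => nn i j) Hi (i:=j) isT.
  by rewrite eij mul1r => /eqP; rewrite sqrf_eq0 subr_eq0 => /eqP.
move=> i j; move: (co i j) => /connectP [p pth ->].
elim: p i pth => //= a p IH i /andP [eia pth].
by rewrite (edge _ _ eia); apply: IH.
Qed.

Lemma rowsum0 (R : realFieldType) n (e : rel 'I_n) (v : 'cV[R]_n) :
  symmetric e -> \sum_i (laplacian R e *m v) i 0 = 0.
Proof.
move=> sy.
under eq_bigr do rewrite lapE.
have h : forall i j, (e i j)%:R * (v i 0 - v j 0) = (e i j)%:R * v i 0 - (e i j)%:R * v j 0 :> R.
  by move=> i j; ring.
under eq_bigr do (under eq_bigr do rewrite h; rewrite sumrB).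
rewrite sumrB (exchange_big _ _ _ _ _ (fun i j => (e i j)%:R * v j 0)) /=.
apply/eqP; rewrite subr_eq0; apply/eqP; apply: eq_bigr => i _; apply: eq_bigr => j _.
by rewrite sy.
Qed.

Lemma mp_unique (R : comNzRingType) n (A X Y : 'M[R]_n) :
  is_MP_pinv A X -> is_MP_pinv A Y -> X = Y.
Proof.
move=> [h1 h2 h3 h4] [k1 k2 k3 k4].
have eAX : A *m X = A *m Y.
  have e1 : A^T = A^T *m Y^T *m A^T by rewrite -trmx_mul -trmx_mul mulmxA k1.
  rewrite -h3 trmx_mul e1 !mulmxA -trmx_mul h3 -mulmxA -trmx_mul k3 mulmxA h1 //.
have eXA : X *m A = Y *m A.
  have e1 : A^T = A^T *m Y^T *m A^T by rewrite -trmx_mul -trmx_mul mulmxA k1.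
  rewrite -h4 trmx_mul e1 -!mulmxA -trmx_mul h4 mulmxA -trmx_mul k4 !mulmxA -(mulmxA Y) -(mulmxA Y) h1 //.
by rewrite -h2 -mulmxA eAX mulmxA eXA k2.
Qed.

Lemma dot_expand (R : realFieldType) n (u v p q : 'cV[R]_n) c :
  dotv (u - c *: v) (p - c *: q) =
  dotv u p - c * dotv u q - c * dotv v p + c ^+ 2 * dotv v q.
Proof.
rewrite /dotv !mulr_sumr -!sumrB -big_split /=; apply: eq_bigr => i _.
rewrite !mxE; ring.
Qed.

Lemma dot_sym (R : realFieldType) n (A : 'M[R]_n) (u v : 'cV[R]_n) :
  A^T = A -> dotv u (A *m v) = dotv v (A *m u).
Proof.
move=> At; rewrite -!dotvE.
have -> : (u^T *m (A *m v)) 0 0 = (u^T *m (A *m v))^T 0 0 by rewrite [RHS]mxE.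
by rewrite !trmx_mul trmxK At mulmxA.
Qed.

Lemma sum_ind (R : realFieldType) n (s : 'I_n) : \sum_i ind R s i 0 = 1.
Proof.
rewrite (bigD1 s) //= big1 ?addr0; first by rewrite mxE !eqxx.
by move=> i /negPf H; rewrite mxE H.
Qed.

Lemma dot_ind (R : realFieldType) n (s t : 'I_n) : s != t ->
  dotv (ind R s - ind R t) (ind R s - ind R t) = 2.
Proof.
move=> st; rewrite -dotvE /ind.
have -> : (delta_mx s 0 - delta_mx t 0 : 'cV[R]_n)^T = (delta_mx s 0)^T - (delta_mx t 0)^T.
  by apply/matrixP => i j; rewrite !mxE.
rewrite !trmx_delta mulmxBl !mulmxBr.
rewrite !mul_delta_mx_cond !eqxx (negPf st) eq_sym (negPf st) !mulr0n !mulr1n.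
by rewrite !mxE /=; ring.
Qed.

Lemma sum_ind_diff (R : realFieldType) n (s t : 'I_n) :
  \sum_i (ind R s - ind R t) i 0 = 0.
Proof.
have -> : \sum_i (ind R s - ind R t) i 0 = \sum_i (ind R s i 0 - ind R t i 0).
  by apply: eq_bigr => i _; rewrite !mxE.
by rewrite sumrB !sum_ind subrr.
Qed.

Lemma subE (R : realFieldType) m n (M N : 'M[R]_(m, n)) i j : (M - N) i j = M i j - N i j.
Proof. by rewrite !mxE. Qed.
Unset Implicit Arguments. Set Strict Implicit.

Theorem theoremA1 (R : realFieldType) (n : nat) (e : rel 'I_n)
    (Lp : 'M[R]_n) (s t : 'I_n) :
  simple_graph e -> connected_graph e ->
  is_MP_pinv (laplacian R e) Lp ->
  s != t ->
  2 / (n%:R ^+ 2) <= biharmonic_sq Lp s t.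
Proof.
move=> [sy irr] co mp st.
set A := laplacian R e.
have At : A^T = A by apply: lap_tr.
have [h1 h2 h3 h4] := mp.
have XT : Lp^T = Lp.
  apply/esym/(mp_unique mp); split.
  - by have := congr1 trmx h1; rewrite !trmx_mul At mulmxA.
  - by have := congr1 trmx h2; rewrite !trmx_mul At mulmxA.
  - by rewrite trmx_mul trmxK At -h4 trmx_mul At.
  - by rewrite trmx_mul trmxK At -h3 trmx_mul At.
have n0 : (0 < n)%N by apply: leq_ltn_trans (leq0n s) (ltn_ord s).
have nR : 0 < n%:R :> R by rewrite ltr0n.
set x := ind R s - ind R t.
have xx : dotv x x = 2 by apply: dot_ind.
have sx : \sum_i x i 0 = 0 by apply: sum_ind_diff.
have AAX : A *m (A *m Lp) = A.
  by have := congr1 trmx h1; rewrite trmx_mul h3 At.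
set w := x - A *m (Lp *m x).
have Aw : A *m w = 0 by rewrite /w mulmxBr (mulmxA A Lp x) mulmxA AAX subrr.
have Q0 : dotv w (A *m w) = 0.
  by rewrite Aw /dotv big1 // => i _; rewrite [X in _ * X]mxE mulr0.
have wc := ker_const sy co Q0.
have sw : \sum_i w i 0 = 0.
  rewrite /w; under eq_bigr do rewrite subE.
  by rewrite sumrB sx rowsum0 // subrr.
have w0 : forall i, w i 0 = 0.
  move=> i; have : \sum_j w j 0 = n%:R * w i 0.
    by rewrite (eq_bigr (fun _ => w i 0)) ?sumr_const ?card_ord ?mulr_natl // => j _; apply: wc.
  rewrite sw => /esym/eqP; rewrite mulf_eq0 => /orP [|/eqP //].
  by rewrite pnatr_eq0 => /eqP n00; rewrite n00 in n0.
have Axy : A *m (Lp *m x) = x.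
  apply/esym/eqP; rewrite -subr_eq0; apply/eqP/matrixP => i j.
  by rewrite (ord1 j) -/w w0 mxE.
set y := Lp *m x.
have B : biharmonic_sq Lp s t = dotv y y.
  by rewrite /biharmonic_sq -/x -dotvE /y trmx_mul XT !mulmxA.
have Qx : dotv x (A *m x) <= n%:R * 2 by rewrite -xx; apply: quad_le.
have Qy : dotv y (A *m y) <= n%:R * dotv y y by apply: quad_le.
have xAy : dotv x (A *m y) = 2 by rewrite Axy.
have yAx : dotv y (A *m x) = 2 by rewrite dot_sym.
have Qz : 0 <= dotv (x - n%:R *: y) (A *m (x - n%:R *: y)) by apply: quad_ge0.
rewrite mulmxBr -scalemxAr dot_expand xAy yAx in Qz.
rewrite B ler_pdivrMr ?exprn_gt0 //.
have Yge : 0 <= dotv y y by rewrite /dotv; apply: sumr_ge0 => i _; rewrite -expr2 sqr_ge0.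
nra.
Qed.
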